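(* The metric space $L_\infty$ satisfies $\operatorname{trasdim} L_\infty=\infty$.
   Context: Let $X=\bigsqcup_{i=1}^\infty\mathbb Z^i$ (disjoint union). For $a=(a_1,\dots,a_l)\in\mathbb Z^l$ and $b=(b_1,\dots,b_k)\in\mathbb Z^k$ with $l\le k$, let $a'=(a_1,\dots,a_l,0,\dots,0)\in\mathbb Z^k$, let $c=0$ if $l=k$ and $c=l+(l+1)+\dots+(k-1)$ if $l<k$, and set $d_\infty(a,b)=d_\infty(b,a)=\max\{d(a',b),c\}$, where $d$ is the sup-metric $d(x,y)=\max_j|x_j-y_j|$ on $\mathbb Z^k$. $L_\infty=(X,d_\infty)$. A family $\mathcal A$ of subsets is uniformly bounded if there is $C>0$ with $\operatorname{diam}A\le C$ for all $A\in\mathcal A$; it is $r$-disjoint if $d(A_1,A_2)\ge r$ for all distinct $A_1,A_2\in\mathcal A$. For a set $L$, $\mathrm{Fin}\,L$ is the collection of finite nonempty subsets of $L$. For $M\subset \mathrm{Fin}\,L$ and $\sigma\in\{\emptyset\}\cup\mathrm{Fin}\,L$, $M^\sigma=\{\tau\in\mathrm{Fin}\,L:\sigma\cup\tau\in M,\ \sigma\cap\tau=\emptyset\}$, and $M^a=M^{\{a\}}$. The ordinal $\operatorname{Ord}M$: $\operatorname{Ord}M=0$ iff $M=\emptyset$; $\operatorname{Ord}M\le\alpha$ iff $\operatorname{Ord}M^a<\alpha$ for every $a\in L$; $\operatorname{Ord}M=\alpha$ iff $\operatorname{Ord}M\le\alpha$ and not $\operatorname{Ord}M<\alpha$; $\operatorname{Ord}M=\infty$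 iff $\operatorname{Ord} M\le\alpha$ for no ordinal $\alpha$. For a metric space $(X,d)$, $A(X,d)$ is the set of $\sigma\in\mathrm{Fin}\,\mathbb N$ such that there do NOT exist uniformly bounded families $\mathcal V_i$, $i\in\sigma$, with $\bigcup_{i\in\sigma}\mathcal V_i$ covering $X$ and each $\mathcal V_i$ being $i$-disjoint. Define $\operatorname{trasdim}X=\operatorname{Ord}A(X,d)$, except $\operatorname{trasdim}X=-1$ iff $X$ is bounded. *)

(* Defs.v *)
From mathcomp Require Import all_boot all_order all_algebra.
From mathcomp Require Import finmap.
Set Implicit Arguments. Unset Strict Implicit. Unset Printing Implicit Defensive.
Import Order.TTheory GRing.Theory Num.Theory.
Local Open Scope fset_scope.

Inductive Ord : Type := osup : forall (I : Type), (I -> Ord) -> Ord.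

(* o <= p  iff every predecessor of o is < p ;  o < p iff o <= some predecessor of p *)
Fixpoint ole (o : Ord) : Ord -> Prop :=
  match o with
  | osup Ix f => fun p => forall i : Ix,
      (fix lt (q : Ord) : Prop :=
         match q with osup J g => exists j : J, ole (f i) (g j) end) p
  end.

Definition olt (o p : Ord) : Prop :=
  match p with osup J g => exists j : J, ole o (g j) end.

Definition FinL (L : nat -> Prop) (s : {fset nat}) : Prop :=
  s != fset0 /\ (forall a, a \in s -> L a).

Definition Msig (L : nat -> Prop) (M : {fset nat} -> Prop) (sigma : {fset nat})
  : {fset nat} -> Prop :=
  fun tau => FinL L tau /\ M (sigma `|` tau) /\ sigma `&` tau = fset0.

Definition Ma L M (a : nat) := Msig L M [fset a].

Definition is_empty_fam (M : {fset nat} -> Prop) := forall tau, ~ M tau.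

(* OrdLe L M alpha  <->  "Ord M <= alpha":  Ord M = 0 iff M empty;
   Ord M <= alpha iff for every a in L, Ord M^a < alpha, where
   "Ord N < alpha" means Ord N <= beta for some beta < alpha. *)
Inductive OrdLe (L : nat -> Prop) : ({fset nat} -> Prop) -> Ord -> Prop :=
| OrdLe_empty M alpha : is_empty_fam M -> OrdLe L M alpha
| OrdLe_step M alpha :
    (forall a, L a -> exists beta, olt beta alpha /\ OrdLe L (Ma L M a) beta) ->
    OrdLe L M alpha.

Definition Ord_infty L M : Prop := forall alpha : Ord, ~ OrdLe L M alpha.

Section Metric.
Variables (T : Type) (d : T -> T -> nat).

Definition bounded_space : Prop := exists C, forall x y : T, d x y <= C.

Definition diam_le (A : T -> Prop) (C : nat) : Prop :=
  forall x y, A x -> A y -> d x y <= C.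

Definition unif_bounded (V : (T -> Prop) -> Prop) : Prop :=
  exists C, forall A, V A -> diam_le A C.

Definition r_disjoint (V : (T -> Prop) -> Prop) (r : nat) : Prop :=
  forall A1 A2, V A1 -> V A2 -> A1 <> A2 ->
    forall x y, A1 x -> A2 y -> r <= d x y.

Definition posnat (i : nat) : Prop := 0 < i.

Definition Aset (sigma : {fset nat}) : Prop :=
  FinL posnat sigma /\
  ~ exists V : nat -> ((T -> Prop) -> Prop),
      (forall i, i \in sigma -> unif_bounded (V i) /\ r_disjoint (V i) i) /\
      (forall x, exists i, i \in sigma /\ exists A, V i A /\ A x).

Definition trasdim_infty : Prop := ~ bounded_space /\ Ord_infty posnat Aset.
End Metric.

(* X = disjoint union of Z^i, i >= 1: nonempty finite sequences of integers *)
Definition Xinf := {s : seq int | 0 < size s}.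

Definition dseq (a b : seq int) : nat :=
  let l := minn (size a) (size b) in
  let k := maxn (size a) (size b) in
  maxn (\max_(j < k) absz (nth 0%R a j - nth 0%R b j)%R)
       (\sum_(l <= j < k) j).

Definition dinf (x y : Xinf) : nat := dseq (val x) (val y).

(* Main.v *)
Require Import Defs.
From mathcomp Require Import all_boot all_order all_algebra.
From mathcomp Require Import finmap.
From mathcomp Require Import zify.
From Stdlib Require Import ClassicalEpsilon Classical.
Set Implicit Arguments. Unset Strict Implicit. Unset Printing Implicit Defensive.

Definition valid (k N : nat) (s : seq nat) : bool :=
  (size s == k) && sorted ltn s && all (fun x => x < N) s.
Definition shift (a b : seq nat) : Prop :=
  exists z, b = rcons (behead a) z /\ last 0 a < z.

Lemma valid_rcons k N a z : 0 < k -> valid k N a -> last 0 a < z -> z < N ->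
  valid k.+1 N (rcons a z).
Proof.
move=> Hk; case: a => [|x0 p].
  by rewrite /valid /= => /andP[/andP[/eqP E _] _]; rewrite -E in Hk.
move=> /andP[/andP[/eqP <- Hs] Ha] Hl Hz.
rewrite /valid /= size_rcons eqxx /= rcons_path all_rcons Hz /=; move: Hs Ha Hl => /= -> /andP[-> ->] -> //.
Qed.

Lemma ramsey k : 0 < k -> forall C : finType, exists N,
  forall phi : seq nat -> C, exists x y,
    valid k N x /\ valid k N y /\ shift x y /\ phi x = phi y.
Proof.
elim: k => [//|k IH] _ C.
case: k IH => [|k] IH.
  exists #|C|.+1 => phi.
  pose f := fun i : 'I_#|C|.+1 => phi [:: val i].
  have /injectivePn [i [j Hij Hf]] : ~~ injectiveb f.
    apply/injectiveP => /leq_card; by rewrite card_ord ltnn.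
  have [Hlt|Hge] := ltnP i j.
    exists [:: val i], [:: val j]; split; first by rewrite /valid /= ltn_ord.
    split; first by rewrite /valid /= ltn_ord.
    by split=> //; exists j.
  have Hlt : j < i by rewrite ltn_neqAle Hge andbT eq_sym.
  exists [:: val j], [:: val i]; split; first by rewrite /valid /= ltn_ord.
  split; first by rewrite /valid /= ltn_ord.
  by split=> //; exists i.
have [N HN] := IH (erefl _) {set C}.
exists N => phi.
pose psi := fun a : seq nat =>
  [set phi (rcons a (val x)) | x in [pred x : 'I_N | last 0 a < x]].
have [a [a' [Va [Va' [[z [Ea' Hz]] Hpsi]]]]] := HN psi.
have zN : z < N.
  move: Va' => /andP[_ /allP]; apply; by rewrite Ea' mem_rcons mem_head.
have : phi (rcons a z) \in psi a.
  by apply/imsetP; exists (Ordinal zN).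
rewrite Hpsi => /imsetP [x Hx Hxe].
have Hx' : z < x by move: Hx; rewrite inE Ea' last_rcons.
exists (rcons a z), (rcons a' x); split; first exact: valid_rcons.
split; first by apply: valid_rcons => //; rewrite Ea' last_rcons.
split; last by [].
exists x; split; last by rewrite last_rcons.
clear Hpsi Hx Hxe; case: a Va Ea' Hz => [|y0 q]; first by rewrite /valid.
by move=> _ ->.
Qed.

Definition adj k N a b : Prop := valid k N a /\ valid k N b /\ (shift a b \/ shift b a).

Inductive reach k N : nat -> seq nat -> seq nat -> Prop :=
| reach0 u : reach k N 0 u u
| reachS t u x w : adj k N u x -> reach k N t x w -> reach k N t.+1 u w.

Lemma shift_nth a b q : shift a b -> q.+1 < size a -> nth 0 b q = nth 0 a q.+1.
Proof.
move=> [z [-> _]] Hq; rewrite nth_rcons size_behead.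
have -> : q < (size a).-1 by lia.
by rewrite nth_behead.
Qed.

Lemma offset k N t u w : reach k N t u w -> exists f g, f + g = t /\
  forall p, t <= p -> p + t < k -> nth 0 w (p + g - f) = nth 0 u p.
Proof.
elim=> [v|t' v x w' [Vv [Vx Hs]] _ [f [g [Ht IH]]]].
  by exists 0, 0; split => // p _ _; rewrite addn0 subn0.
have Sv : size v = k by move: Vv => /andP[/andP[/eqP]].
have Sx : size x = k by move: Vx => /andP[/andP[/eqP]].
case: Hs => Hs.
  exists f.+1, g; split; first by lia.
  move=> p Hp Hpk.
  have -> : p + g - f.+1 = (p.-1) + g - f by lia.
  rewrite IH; [|lia|lia].
  rewrite (shift_nth Hs); last by lia.
  by have -> : (p.-1).+1 = p by lia.
exists f, g.+1; split; first by lia.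
move=> p Hp Hpk.
have -> : p + g.+1 - f = (p.+1) + g - f by lia.
rewrite IH; [|lia|lia].
by rewrite (shift_nth Hs) //; lia.
Qed.

Lemma parity k N D t1 t2 u x y : 2 * D + 3 <= k -> valid k N x -> valid k N y ->
  shift x y -> reach k N t1 u x -> reach k N t2 u y -> t1 <= D -> t2 <= D ->
  odd t1 != odd t2.
Proof.
move=> Hk Vx Vy Hs R1 R2 H1 H2.
have [f1 [g1 [E1 F1]]] := offset R1.
have [f2 [g2 [E2 F2]]] := offset R2.
have Sx : size x = k by move: Vx => /andP[/andP[/eqP]].
have Sy : size y = k by move: Vy => /andP[/andP[/eqP]].
have Uy : uniq y by move: Vy => /andP[/andP[_ /(sorted_uniq ltn_trans ltnn)]].
have e1 := F1 D.+1 ltac:(lia) ltac:(lia).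
have e2 := F2 D.+1 ltac:(lia) ltac:(lia).
have e3 : nth 0 x (D.+1 + g1 - f1) = nth 0 y (D + g1 - f1).
  rewrite (shift_nth Hs); last by lia.
  by congr nth; lia.
have : nth 0 y (D + g1 - f1) == nth 0 y (D.+1 + g2 - f2) by rewrite -e3 e1 e2.
rewrite nth_uniq ?Sy //; [move=> /eqP He|lia|lia].
have Ht : t1 + t2 = (f1 + g2).*2.+1 by rewrite -addnn; lia.
have : odd (t1 + t2) by rewrite Ht /= odd_double.
by rewrite oddD; case: (odd t1); case: (odd t2).
Qed.

Definition reachb k N t u v : bool :=
  if excluded_middle_informative (reach k N t u v) then true else false.

Lemma reachbP k N t u v : reflect (reach k N t u v) (reachb k N t u v).
Proof. by rewrite /reachb; case: excluded_middle_informative => H; constructor. Qed.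

Definition dist k N T u v := find (fun t => reachb k N t u v) (iota 0 T).

Lemma dist_le k N T u v : dist k N T u v <= T.
Proof. by rewrite /dist; move: (find_size (fun t => reachb k N t u v) (iota 0 T)); rewrite size_iota. Qed.

Lemma dist_reach k N T u v : dist k N T u v < T -> reach k N (dist k N T u v) u v.
Proof.
move=> H; have Hh : has (fun t => reachb k N t u v) (iota 0 T).
  by rewrite has_find size_iota.
have := nth_find 0 Hh; rewrite nth_iota //.
by rewrite add0n => /reachbP.
Qed.

Lemma dist_min k N T u v t : t < T -> reach k N t u v -> dist k N T u v <= t.
Proof.
move=> Ht Hr; rewrite leqNgt; apply/negP => Hlt.
have := before_find 0 Hlt; rewrite nth_iota // add0n.
by move/negbT/reachbP.
Qed.

Lemma dist_refl k N T u : 0 < T -> dist k N T u u = 0.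
Proof. move=> HT; apply/eqP; rewrite -leqn0; apply: dist_min => //; exact: reach0. Qed.

Lemma adj_sym k N a b : adj k N a b -> adj k N b a.
Proof. by move=> [Va [Vb [H|H]]]; do 2 split => //; [right|left]. Qed.

Lemma dist_adj k N T v v' w : adj k N v v' -> dist k N T v w <= (dist k N T v' w).+1.
Proof.
move=> Ha; have [Hlt|Hge] := ltnP (dist k N T v' w) T.
  have Hr := reachS Ha (dist_reach Hlt).
  have [H2|H2] := ltnP (dist k N T v' w).+1 T; first exact: dist_min.
  exact: leq_trans (dist_le _ _ _ _ _) H2.
apply: leq_trans (dist_le _ _ _ _ _) _; exact: leq_trans Hge (leqnSn _).
Qed.

Fixpoint allseqs (k N : nat) : seq (seq nat) :=
  if k is k'.+1 then [seq x :: s | x <- iota 0 N, s <- allseqs k' N] else [:: [::]].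

Lemma allseqs_mem k N s : size s = k -> all (fun x => x < N) s -> s \in allseqs k N.
Proof.
elim: k s => [|k IH] [|x s] //=.
move=> [Hs] /andP[Hx Ha].
apply/allpairsP; exists (x, s) => /=; split => //; first by rewrite mem_iota.
exact: IH.
Qed.

Lemma valid_mem k N s : valid k N s -> s \in allseqs k N.
Proof. by move=> /andP[/andP[/eqP Hs _] Ha]; apply: allseqs_mem. Qed.

Definition Fseq k N T (u : seq nat) : seq int :=
  [seq Posz (dist k N T u w) | w <- [::] :: allseqs k N].

Lemma Fseq_size k N T u : 0 < size (Fseq k N T u).
Proof. by rewrite size_map. Qed.

Definition F k N T (u : seq nat) : Xinf := exist _ (Fseq k N T u) (Fseq_size k N T u).

Lemma dseq_eq (a b : seq int) : size a = size b ->
  dseq a b = \max_(j < size a) absz (nth 0%R a j - nth 0%R b j)%R.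
Proof. by move=> E; rewrite /dseq E minnn maxnn big_geq // maxn0. Qed.

Lemma dinf_adj k N T v v' : adj k N v v' -> dinf (F k N T v) (F k N T v') <= 1.
Proof.
move=> Ha; rewrite /dinf /= dseq_eq; last by rewrite !size_map.
apply/bigmax_leqP => j _.
have Hj : j < size ([::] :: allseqs k N) by move: (ltn_ord j); move: (nat_of_ord j) => jj; rewrite size_map.
rewrite !(nth_map [::]) //.
have H1 := dist_adj T (nth [::] ([::] :: allseqs k N) j) Ha.
have H2 := dist_adj T (nth [::] ([::] :: allseqs k N) j) (adj_sym Ha).
lia.
Qed.

Lemma dinf_ge k N T u x : 0 < T -> valid k N x -> dist k N T u x <= dinf (F k N T u) (F k N T x).
Proof.
move=> HT Vx; rewrite /dinf /= dseq_eq; last by rewrite !size_map.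
have Hx : x \in [::] :: allseqs k N by rewrite inE valid_mem ?orbT.
have Hi : index x ([::] :: allseqs k N) < size (Fseq k N T u) by rewrite size_map index_mem.
apply: leq_trans (leq_bigmax (Ordinal Hi)).
rewrite (_ : nat_of_ord (Ordinal Hi) = index x ([::] :: allseqs k N)) //.
rewrite !(nth_map [::]) ?index_mem // nth_index // dist_refl //.
lia.
Qed.
Local Open Scope fset_scope.


Fixpoint OrdLe_notQ (L : nat -> Prop) (Q : ({fset nat} -> Prop) -> Prop)
  (HQ1 : forall M, Q M -> ~ is_empty_fam M)
  (HQ2 : forall M, Q M -> exists a, L a /\ Q (Ma L M a))
  M alpha (H : OrdLe L M alpha) {struct H} : ~ Q M :=
  match H with
  | OrdLe_empty M0 _ He => fun q => HQ1 M0 q He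
  | OrdLe_step M0 _ Hs => fun q =>
      match HQ2 M0 q with
      | ex_intro a (conj La qa) =>
          match Hs a La with
          | ex_intro beta (conj _ H') => OrdLe_notQ HQ1 HQ2 H' qa
          end
      end
  end.

Lemma bound_seq (P : nat -> nat -> Prop) (s : seq nat) :
  (forall i C C', C <= C' -> P i C -> P i C') ->
  (forall i, i \in s -> exists C, P i C) -> exists D, forall i, i \in s -> P i D.
Proof.
move=> Hm; elim: s => [|x s IH] H; first by exists 0.
have [C HC] := H x (mem_head _ _).
have [D HD] : exists D, forall i, i \in s -> P i D by apply: IH => i Hi; apply: H; rewrite inE Hi orbT.
exists (maxn C D) => i; rewrite inE => /orP[/eqP ->|Hi].
  by apply: Hm HC; apply: leq_maxl.
by apply: Hm (HD i Hi); apply: leq_maxr.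
Qed.

Lemma leq_sumn x s : x \in s -> x <= sumn s.
Proof.
elim: s => [//|y s IH]; rewrite inE /= => /orP[/eqP ->|/IH]; first exact: leq_addr.
by move=> H; apply: leq_trans H (leq_addl _ _).
Qed.

Lemma core (tau : {fset nat}) : tau != fset0 -> (forall x, x \in tau -> 2 <= x) ->
  Aset dinf tau.
Proof.
move=> Hne H2; split.
  by split => // a Ha; rewrite /posnat; apply: leq_trans (H2 a Ha).
move=> [V [HV Hcov]].
have [D HD] : exists D, forall i, i \in enum_fset tau ->
    forall A, V i A -> diam_le dinf A D.
  apply: bound_seq.
    move=> i C C' HC HP A HA x y Ax Ay; exact: leq_trans (HP A HA x y Ax Ay) HC.
  by move=> i Hi; have [[C HC] _] := HV i Hi; exists C.
pose B := sumn (enum_fset tau).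
have HB : forall i, i \in tau -> i <= B by move=> i Hi; apply: leq_sumn.
have Hcov' : forall x, exists p : nat * (Xinf -> Prop),
    p.1 \in tau /\ V p.1 p.2 /\ p.2 x.
  move=> x; have [i [Hi [A [HA Ax]]]] := Hcov x; by exists (i, A).
pose pk := fun x => proj1_sig (constructive_indefinite_description _ (Hcov' x)).
have pkP : forall x, (pk x).1 \in tau /\ V (pk x).1 (pk x).2 /\ (pk x).2 x.
  by move=> x; rewrite /pk; case: constructive_indefinite_description.
pose k := (2 * D + 3)%N.
pose T := D.+1.
have Hk : 0 < k by rewrite /k addn3.
have [N HN] := ramsey Hk (prod (ordinal B.+1) bool).
pose Fk := F k N T.
pose bp := fun (i : nat) (A : Xinf -> Prop) =>
  epsilon (inhabits [::]) (fun u : seq nat => (pk (Fk u)).1 = i /\ (pk (Fk u)).2 = A).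
have bpP : forall v, (pk (Fk (bp (pk (Fk v)).1 (pk (Fk v)).2))).1 = (pk (Fk v)).1 /\
    (pk (Fk (bp (pk (Fk v)).1 (pk (Fk v)).2))).2 = (pk (Fk v)).2.
  move=> v; exact: (epsilon_spec (inhabits [::]) (fun u : seq nat => (pk (Fk u)).1 = (pk (Fk v)).1 /\ (pk (Fk u)).2 = (pk (Fk v)).2) (ex_intro _ v (conj erefl erefl))).
pose phi := fun v : seq nat =>
  ((inord (pk (Fk v)).1 : 'I_B.+1),
   odd (dist k N T (bp (pk (Fk v)).1 (pk (Fk v)).2) v)).
have [x [y [Vx [Vy [Hs Hphi]]]]] := HN phi.
have [Ix [VIx Ax]] := pkP (Fk x).
have [Iy [VIy Ay]] := pkP (Fk y).
have Eij : (pk (Fk x)).1 = (pk (Fk y)).1.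
  move: Hphi => [/(congr1 (@nat_of_ord _))]; rewrite !inordK; [by []| |].
    by rewrite ltnS; apply: HB.
  by rewrite ltnS; apply: HB.
have Hadj : adj k N x y by split => //; split => //; left.
have Hd1 := dinf_adj T Hadj.
have EA : (pk (Fk x)).2 = (pk (Fk y)).2.
  apply: NNPP => Hne'.
  have [_ Hrd] := HV _ Ix.
  have VIy' := VIy; rewrite -Eij in VIy'.
  have H := Hrd _ _ VIx VIy' Hne' _ _ Ax Ay.
  have := leq_trans (H2 _ Ix) (leq_trans H Hd1); by [].
pose u := bp (pk (Fk x)).1 (pk (Fk x)).2.
have Eu : bp (pk (Fk y)).1 (pk (Fk y)).2 = u by rewrite /u Eij EA.
have [Eu1 Eu2] := bpP x.
have [_ [_ Au]] := pkP (Fk u).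
have HT : 0 < T by [].
have Dx : dist k N T u x <= D.
  apply: leq_trans (dinf_ge u HT Vx) _.
  apply: (HD _ Ix _ VIx); last by [].
  by rewrite -Eu2.
have Dy : dist k N T u y <= D.
  apply: leq_trans (dinf_ge u HT Vy) _.
  apply: (HD _ Ix _ VIx); first by rewrite -Eu2.
  by rewrite EA.
have Rx := dist_reach (Dx : dist k N T u x < T).
have Ry := dist_reach (Dy : dist k N T u y < T).
have := parity (leqnn k) Vx Vy Hs Rx Ry Dx Dy.
move: Hphi => [_]; rewrite Eu -/u => ->.
by rewrite eqxx.
Qed.

Definition Qgood (M : {fset nat} -> Prop) : Prop :=
  exists sigma : {fset nat}, forall tau : {fset nat}, tau != fset0 ->
    (forall x, x \in tau -> 2 <= x) -> tau `&` sigma = fset0 -> M tau.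

Lemma fresh (sigma : {fset nat}) : exists a, 2 <= a /\ a \notin sigma.
Proof.
exists (sumn (enum_fset sigma)).+2; split => //.
apply/negP => /leq_sumn; lia.
Qed.

Lemma fset_ne0 (tau : {fset nat}) a : a \in tau -> tau != fset0.
Proof. by move=> Ha; apply/eqP => E; rewrite E in_fset0 in Ha. Qed.

Lemma Qgood1 M : Qgood M -> ~ is_empty_fam M.
Proof.
move=> [sigma Hs] He; have [a [Ha Hn]] := fresh sigma.
apply: (He [fset a]); apply: Hs.
- exact: (fset_ne0 (fset11 a)).
- by move=> x; rewrite in_fset1 => /eqP ->.
- apply/fsetP => x; rewrite in_fsetI in_fset1 in_fset0.
  by case: eqP => // ->; apply/negbTE.
Qed.

Lemma Qgood2 M : Qgood M -> exists a, posnat a /\ Qgood (Ma posnat M a).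
Proof.
move=> [sigma Hs]; have [a [Ha Hn]] := fresh sigma.
exists a; split; first by apply: leq_trans Ha.
exists (a |` sigma) => tau Hne H2 Hdis.
have Hd : forall x, x \in tau -> x \in a |` sigma -> False.
  by move=> x Hx Hx'; have := in_fset0 x; rewrite -Hdis in_fsetI Hx Hx'.
split; [split => // x Hx; by apply: leq_trans (H2 x Hx)|split].
- apply: Hs.
  + by apply: (@fset_ne0 _ a); rewrite in_fsetU in_fset1 eqxx.
  + by move=> x; rewrite in_fsetU in_fset1 => /orP[/eqP ->|/H2].
  + apply/fsetP => x; rewrite in_fsetI in_fsetU in_fset1 in_fset0.
    case: eqP => [->|_] /=; first by apply/negbTE.
    case Hx: (x \in tau) => //=; apply/negP => Hs'.
    by apply: (Hd x Hx); rewrite in_fsetU Hs' orbT.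
- apply/fsetP => x; rewrite in_fsetI in_fset1 in_fset0.
  case: eqP => [->|//] /=; apply/negP => Ht.
  by apply: (Hd a Ht); rewrite in_fsetU in_fset1 eqxx.
Qed.

Theorem theorem3 : trasdim_infty dinf.
Proof.
split.
  move=> [C HC].
  pose x : Xinf := exist _ [:: 0%R] (erefl _).
  have Hy : 0 < size (nseq C.+2 (0%R : int)) by rewrite size_nseq.
  pose y : Xinf := exist _ (nseq C.+2 0%R) Hy.
  have := HC x y; rewrite /dinf /dseq /= size_nseq.
  rewrite (_ : minn 1 C.+2 = 1) // (_ : maxn 1 C.+2 = C.+2) //.
  rewrite big_nat_recr //= => H.
  have := leq_trans (leq_maxr _ _) H.
  lia.
move=> alpha H.
apply: (OrdLe_notQ Qgood1 Qgood2 H).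
exists fset0 => tau Hne H2 _; exact: core.
Qed.
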